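(* In the situation of Theorem 3.2 (finite-dimensional two-step solvable $\mathfrak g=\mathfrak g^\infty\rtimes\mathfrak n$ over a field of characteristic zero, an LR-structure $\cdot$ on $\mathfrak n$ with $\mathfrak n\cdot\mathfrak n\subseteq[\mathfrak n,\mathfrak n]$), one has $\mathfrak n^i\cdot\mathfrak n^j\subseteq\mathfrak n^{i+j}$ for all $i,j\ge1$, and the LR-structure $(a,x)\star(b,y)=([x,b],x\cdot y)$ on $\mathfrak g$ ($a,b\in\mathfrak g^\infty$, $x,y\in\mathfrak n$) is complete.
   Context: Lower central series: $\mathfrak n^1=\mathfrak n$, $\mathfrak n^{i+1}=[\mathfrak n,\mathfrak n^i]$; $\mathfrak g^\infty=\bigcap_i\mathfrak g^i$. An LR-structure on a Lie algebra is a bilinear product $\cdot$ on its underlying space with $x\cdot(y\cdot z)=y\cdot(x\cdot z)$, $(x\cdot y)\cdot z=(x\cdot z)\cdot y$ and $x\cdot y-y\cdot x=[x,y]$; it is complete if all right multiplications $y\mapsto y\cdot x$ are nilpotent. $\mathfrak n$ is a subalgebra complementary to the abelian ideal $\mathfrak g^\infty$. *)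

(* Defs.v *)
From HB Require Import structures.
From mathcomp Require Import all_boot all_order all_algebra.
Set Implicit Arguments. Unset Strict Implicit. Unset Printing Implicit Defensive.
Import GRing.Theory.
Local Open Scope ring_scope.

Section LieDefs.
Variables (K : fieldType) (V : vectType K).

Definition lie_bracket (br : V -> V -> V) : Prop :=
  [/\ forall a x y z, br (a *: x + y) z = a *: br x z + br y z,
      forall a x y z, br z (a *: x + y) = a *: br z x + br z y,
      forall x, br x x = 0
    & forall x y z, br x (br y z) + br y (br z x) + br z (br x y) = 0].

(* [U, W] : the subspace spanned by all brackets [u, w], u in U, w in W
   (by bilinearity it is spanned by brackets of basis vectors). *)
Definition brk (br : V -> V -> V) (U W : {vspace V}) : {vspace V} :=
  (<<[seq br u w | u <- (vbasis U : seq V), w <- (vbasis W : seq V)]>>)%VS.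

Fixpoint lcs0 (br : V -> V -> V) (N : {vspace V}) (k : nat) : {vspace V} :=
  if k is k'.+1 then brk br N (lcs0 br N k') else N.

(* lower central series, indexed from 1:  lcs N 1 = N, lcs N (i+1) = [N, lcs N i] *)
Definition lcs (br : V -> V -> V) (N : {vspace V}) (i : nat) : {vspace V} :=
  lcs0 br N i.-1.

(* p is an LR-structure on the subalgebra N (p is only relevant on N) *)
Definition LR_on (br : V -> V -> V) (N : {vspace V}) (p : V -> V -> V) : Prop :=
  (forall x y, x \in N -> y \in N -> p x y \in N) /\
  [/\ forall a x y z, x \in N -> y \in N -> z \in N ->
        p (a *: x + y) z = a *: p x z + p y z,
      forall a x y z, x \in N -> y \in N -> z \in N ->
        p z (a *: x + y) = a *: p z x + p z y,
      forall x y z, x \in N -> y \in N -> z \in N -> p x (p y z) = p y (p x z),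
      forall x y z, x \in N -> y \in N -> z \in N -> p (p x y) z = p (p x z) y
    & forall x y, x \in N -> y \in N -> p x y - p y x = br x y].

Definition complete_product (m : V -> V -> V) : Prop :=
  forall v : V, exists k : nat, forall u : V, iter k (fun w => m w v) u = 0.

End LieDefs.

(* Main.v *)
Require Import Defs.
From HB Require Import structures.
From mathcomp Require Import all_boot all_order all_algebra.
Import GRing.Theory.
Local Open Scope ring_scope.

Section S.
Variables (K : fieldType) (V : vectType K).

Lemma lin_span_on (U W : {vspace V}) (f : V -> V) (X : seq V) :
  (forall a x y, x \in U -> y \in U -> f (a *: x + y) = a *: f x + f y) ->
  {subset X <= U} -> (forall x, x \in X -> f x \in W) ->
  forall v, v \in <<X>>%VS -> f v \in W.
Proof.
move=> lin XU XW v /(@coord_span _ _ _ (in_tuple X)) ->.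
have f0 : f 0 = 0.
  have := lin 1 0 0 (mem0v U) (mem0v U).
  by rewrite !scale1r addr0 => H; apply: (addrI (f 0)); rewrite addr0 -H.
pose P s := s \in U /\ f s \in W.
suff : P (\sum_i coord (in_tuple X) i v *: (in_tuple X)`_i) by case.
apply: big_rec => [|i s _ [sU fsW]]; first by rewrite /P f0 !mem0v.
have Xi : (in_tuple X)`_i \in U by apply: XU; apply: mem_nth.
rewrite /P lin //; split; first by rewrite memvD ?memvZ.
rewrite memvD ?memvZ //; apply: XW; exact: mem_nth.
Qed.

Lemma brk_mem (br : V -> V -> V) (U W : {vspace V}) x y :
  lie_bracket br -> x \in U -> y \in W -> br x y \in brk br U W.
Proof.
case=> L1 L2 _ _ xU yW.
have xs : x \in <<vbasis U>>%VS by rewrite (span_basis (vbasisP U)).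
have ys : y \in <<vbasis W>>%VS by rewrite (span_basis (vbasisP W)).
apply: (@lin_span_on fullv _ (fun x => br x y) _ _ _ _ _ xs) => //.
- by move=> z _; rewrite memvf.
move=> e eU.
apply: (@lin_span_on fullv _ (br e) _ _ _ _ _ ys) => //.
- by move=> z _; rewrite memvf.
by move=> f' f'W; apply: memv_span; apply: allpairs_f.
Qed.

Lemma brk_gen (br : V -> V -> V) (U W : {vspace V}) z :
  z \in [seq br u w | u <- (vbasis U : seq V), w <- (vbasis W : seq V)] ->
  exists u w, [/\ u \in U, w \in W & z = br u w].
Proof.
by case/allpairsP=> [[u w] [/= /vbasis_mem uU /vbasis_mem wW ->]]; exists u, w.
Qed.

Lemma brk_sub (br : V -> V -> V) (U W T : {vspace V}) :
  (forall x y, x \in U -> y \in W -> br x y \in T) -> (brk br U W <= T)%VS.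
Proof.
move=> H; apply/span_subvP => z /brk_gen [u [w [uU wW ->]]]; exact: H.
Qed.

Lemma brk_ind (br : V -> V -> V) (U W U0 T : {vspace V}) (f : V -> V) :
  (forall a x y, x \in U0 -> y \in U0 -> f (a *: x + y) = a *: f x + f y) ->
  (forall x y, x \in U -> y \in W -> br x y \in U0 /\ f (br x y) \in T) ->
  forall v, v \in brk br U W -> f v \in T.
Proof.
move=> lin H v vB; apply: (@lin_span_on U0 T f _ lin _ _ _ vB).
  by move=> z /brk_gen [u [w [uU wW ->]]]; case: (H u w uU wW).
by move=> z /brk_gen [u [w [uU wW ->]]]; case: (H u w uU wW).
Qed.

Lemma lin0 (U : {vspace V}) (f : V -> V) :
  (forall a x y, x \in U -> y \in U -> f (a *: x + y) = a *: f x + f y) ->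
  f 0 = 0.
Proof.
move=> lin; have := lin 1 0 0 (mem0v U) (mem0v U).
by rewrite !scale1r addr0 => H; apply: (addrI (f 0)); rewrite addr0 -H.
Qed.

Lemma lcs0_sub (br : V -> V -> V) (M : {vspace V}) k :
  (forall x y, x \in M -> y \in M -> br x y \in M) -> (lcs0 br M k <= M)%VS.
Proof.
move=> HM; elim: k => [|k IH] /=; first exact: subvv.
apply: brk_sub => x y xM yk; apply: HM => //; by move/subvP: IH; apply.
Qed.

Lemma lcs0_dec (br : V -> V -> V) (M : {vspace V}) k : lie_bracket br ->
  (forall x y, x \in M -> y \in M -> br x y \in M) ->
  (lcs0 br M k.+1 <= lcs0 br M k)%VS.
Proof.
move=> Hbr HM; elim: k => [|k IH]; first exact: lcs0_sub.
apply: brk_sub => x y xM yk; apply: brk_mem => //; by move/subvP: IH; apply.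
Qed.

Lemma lcs0_mono (br : V -> V -> V) (M : {vspace V}) k m : lie_bracket br ->
  (forall x y, x \in M -> y \in M -> br x y \in M) ->
  (k <= m)%N -> (lcs0 br M m <= lcs0 br M k)%VS.
Proof.
move=> Hbr HM; elim: m => [|m IH]; first by rewrite leqn0 => /eqP ->; exact: subvv.
rewrite leq_eqVlt => /orP [/eqP ->|]; first exact: subvv.
rewrite ltnS => /IH; apply: subv_trans; exact: lcs0_dec.
Qed.

Lemma brN (br : V -> V -> V) x y : lie_bracket br -> br x y = - br y x.
Proof.
case=> L1 L2 L3 _.
have A : forall x y z, br (x + y) z = br x z + br y z.
  by move=> x1 y1 z1; rewrite -[x1]scale1r L1 !scale1r.
have B : forall x y z, br z (x + y) = br z x + br z y.
  by move=> x1 y1 z1; rewrite -[x1]scale1r L2 !scale1r.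
have := L3 (x + y); rewrite A !B !L3 add0r addr0 => /eqP.
by rewrite addr_eq0 => /eqP.
Qed.

Lemma jac_re (br : V -> V -> V) u z y : lie_bracket br ->
  br (br u z) y = br u (br z y) + br z (br y u).
Proof.
move=> Hbr; have := Hbr; case=> _ _ _ L4.
have := L4 y u z; rewrite -addrA => /eqP; rewrite addr_eq0 => /eqP E.
by rewrite (@brN br (br u z) y Hbr) E opprK.
Qed.

Lemma lcs0_brk (br : V -> V -> V) (M : {vspace V}) a b x y : lie_bracket br ->
  x \in lcs0 br M a -> y \in lcs0 br M b -> br x y \in lcs0 br M (a + b).+1.
Proof.
move=> Hbr; have := Hbr; case=> L1 _ _ _.
elim: a b x y => [|a IH] b x y xa yb; first by rewrite add0n; exact: brk_mem.
apply: (@brk_ind br M (lcs0 br M a) fullv _ (fun x => br x y) _ _ x xa).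
  by move=> *; rewrite L1.
move=> u z uM za; split; first exact: memvf.
rewrite jac_re //; apply: memvD.
  apply: brk_mem => //; exact: IH.
have yu : br y u \in lcs0 br M b.+1.
  by rewrite brN // memvN; apply: brk_mem.
by rewrite addSn -addnS; exact: IH.
Qed.

Lemma p_subr (br p : V -> V -> V) (N : {vspace V}) z x y : LR_on br N p ->
  x \in N -> y \in N -> z \in N -> p z (x - y) = p z x - p z y.
Proof.
case=> _ [_ P2 _ _ _] xN yN zN.
by rewrite addrC -scaleN1r P2 // scaleN1r addrC.
Qed.

Lemma p_subl (br p : V -> V -> V) (N : {vspace V}) z x y : LR_on br N p ->
  x \in N -> y \in N -> z \in N -> p (x - y) z = p x z - p y z.
Proof.
case=> _ [P1 _ _ _ _] xN yN zN.
by rewrite addrC -scaleN1r P1 // scaleN1r addrC.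
Qed.

Lemma DL (br p : V -> V -> V) (N : {vspace V}) x y z : LR_on br N p ->
  x \in N -> y \in N -> z \in N ->
  p x (br y z) = br (p x y) z + br y (p x z).
Proof.
move=> H xN yN zN; have := H; case=> Pc [P1 P2 P3 P4 P5].
rewrite -(P5 y z) // -(P5 (p x y) z) ?Pc // -(P5 y (p x z)) ?Pc //.
rewrite (@p_subr br p N) ?Pc // (P3 x y z) // (P3 x z y) // (P4 x y z) //.
by rewrite [RHS]addrC [RHS]addrA subrK.
Qed.

Lemma DR (br p : V -> V -> V) (N : {vspace V}) x y z : LR_on br N p ->
  x \in N -> y \in N -> z \in N ->
  p (br y z) x = br (p y x) z + br y (p z x).
Proof.
move=> H xN yN zN; have := H; case=> Pc [P1 P2 P3 P4 P5].
rewrite -(P5 y z) // -(P5 (p y x) z) ?Pc // -(P5 y (p z x)) ?Pc //.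
rewrite (@p_subl br p N) ?Pc // (P4 y z x) // (P4 z y x) // (P3 z y x) //.
by rewrite addrA subrK.
Qed.

Lemma C1 (br p : V -> V -> V) (N : {vspace V}) x y j : lie_bracket br ->
  (forall x y, x \in N -> y \in N -> br x y \in N) -> LR_on br N p ->
  (forall x y, x \in N -> y \in N -> p x y \in lcs br N 2) ->
  x \in N -> y \in lcs0 br N j -> p x y \in lcs0 br N j.+1.
Proof.
move=> Hbr HN HLR HNN xN; have := HLR; case=> Pc [P1 P2 P3 P4 P5].
elim: j y => [|j IH] y yj; first exact: HNN.
apply: (@brk_ind br N (lcs0 br N j) N _ (p x) _ _ y yj).
  by move=> a x1 y1 x1N y1N; rewrite P2.
move=> u w uN wj.
have wN : w \in N by move/subvP: (@lcs0_sub br N j HN); apply.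
split; first exact: HN.
rewrite (@DL br p N) //; apply: memvD.
  have := @lcs0_brk br N 1 j (p x u) w Hbr (HNN _ _ xN uN) wj.
  by rewrite add1n.
exact: (@lcs0_brk br N 0 j.+1 u (p x w) Hbr uN (IH w wj)).
Qed.

Lemma C2 (br p : V -> V -> V) (N : {vspace V}) x y i j : lie_bracket br ->
  (forall x y, x \in N -> y \in N -> br x y \in N) -> LR_on br N p ->
  (forall x y, x \in N -> y \in N -> p x y \in lcs br N 2) ->
  x \in lcs0 br N i -> y \in lcs0 br N j -> p x y \in lcs0 br N (i + j).+1.
Proof.
move=> Hbr HN HLR HNN; have := HLR; case=> Pc [P1 P2 P3 P4 P5].
move=> + yj.
have yN : y \in N by move/subvP: (@lcs0_sub br N j HN); apply.
elim: i x => [|i IH] x xi; first by rewrite add0n; exact: (@C1 br p N x y j Hbr HN HLR HNN).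
apply: (@brk_ind br N (lcs0 br N i) N _ (fun x => p x y) _ _ x xi).
  by move=> a x1 y1 x1N y1N; rewrite P1.
move=> u w uN wi.
have wN : w \in N by move/subvP: (@lcs0_sub br N i HN); apply.
split; first exact: HN.
rewrite (@DR br p N) //; apply: memvD.
  have := @lcs0_brk br N j.+1 i (p u y) w Hbr (@C1 br p N u y j Hbr HN HLR HNN uN yj) wi.
  by rewrite (_ : (j.+1 + i = i.+1 + j)%N) // !addSn addnC.
exact: (@lcs0_brk br N 0 (i + j).+1 u (p w y) Hbr uN (IH w wi)).
Qed.

Lemma stab_ex (br : V -> V -> V) (M : {vspace V}) : lie_bracket br ->
  (forall x y, x \in M -> y \in M -> br x y \in M) ->
  exists K, lcs0 br M K.+1 = lcs0 br M K.
Proof.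
move=> Hbr HM.
have H : forall k, (exists K, lcs0 br M K.+1 = lcs0 br M K) \/
                   (\dim (lcs0 br M k) + k <= \dim M)%N.
  elim=> [|k [E|IH]]; [by right; rewrite addn0 | by left | ].
  case: (eqVneq (lcs0 br M k.+1) (lcs0 br M k)) => [E|ne].
    by left; exists k.
  right.
  have lt : (\dim (lcs0 br M k.+1) < \dim (lcs0 br M k))%N.
    by rewrite (ltn_leqif (dimv_leqif_eq (@lcs0_dec br M k Hbr HM))) ne.
  apply: leq_trans IH; rewrite addnS -addSn leq_add2r; exact: lt.
case: (H (\dim M).+1) => //.
by rewrite addnS ltnNge leq_addl.
Qed.

Lemma lcs0_incl (br : V -> V -> V) (N : {vspace V}) k : lie_bracket br ->
  (lcs0 br N k <= lcs0 br fullv k)%VS.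
Proof.
move=> Hbr; elim: k => [|k IH] /=; first exact: subvf.
apply: brk_sub => x y xN yk; apply: brk_mem => //; first exact: memvf.
by move/subvP: IH; apply.
Qed.

Lemma nilp (br : V -> V -> V) (Ginf N : {vspace V}) : lie_bracket br ->
  (forall v, v \in Ginf <-> (forall i, (0 < i)%N -> v \in lcs br fullv i)) ->
  (forall x y, x \in N -> y \in N -> br x y \in N) ->
  (Ginf :&: N = 0)%VS ->
  exists c, forall x, x \in lcs0 br N c -> x = 0.
Proof.
move=> Hbr HG HN Hcap.
have Hf : forall x y, x \in (fullv : {vspace V}) -> y \in fullv -> br x y \in fullv.
  by move=> *; exact: memvf.
have [K0 stab] := @stab_ex br fullv Hbr Hf.
have eqK0 : forall d, lcs0 br fullv (K0 + d) = lcs0 br fullv K0.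
  elim=> [|d IH]; first by rewrite addn0.
  by rewrite addnS /= IH; exact: stab.
exists K0 => x xK0.
have xN : x \in N by move/subvP: (@lcs0_sub br N K0 HN); apply.
have xf : x \in lcs0 br fullv K0 by move/subvP: (@lcs0_incl br N K0 Hbr); apply.
have xG : x \in Ginf.
  apply/HG => i _; rewrite /lcs.
  case: (leqP i.-1 K0) => [le|lt].
    by move/subvP: (@lcs0_mono br fullv i.-1 K0 Hbr Hf le); apply.
  by rewrite -(subnKC (ltnW lt)) eqK0.
by apply/eqP; rewrite -memv0 -Hcap memv_cap xG xN.
Qed.

Lemma ideal (br : V -> V -> V) (Ginf : {vspace V}) x b : lie_bracket br ->
  (forall v, v \in Ginf <-> (forall i, (0 < i)%N -> v \in lcs br fullv i)) ->
  b \in Ginf -> br x b \in Ginf.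
Proof.
move=> Hbr HG /HG bG; apply/HG => -[//|[|i]] _; first exact: memvf.
apply: brk_mem => //; first exact: memvf.
exact: (bG i.+1).
Qed.
End S.

Theorem mainTheorem12 (K : fieldType) (V : vectType K)
    (br p : V -> V -> V) (Ginf N : {vspace V}) :
  [pchar K] =i pred0 ->
  lie_bracket br ->
  (* g two-step solvable: [g,g] is abelian *)
  (forall x y, x \in lcs br fullv 2 -> y \in lcs br fullv 2 -> br x y = 0) ->
  (* Ginf = g^infty = intersection of the lower central series of g *)
  (forall v, v \in Ginf <-> (forall i, (0 < i)%N -> v \in lcs br fullv i)) ->
  (* N is a subalgebra complementary to Ginf *)
  (forall x y, x \in N -> y \in N -> br x y \in N) ->
  (Ginf + N = fullv)%VS -> (Ginf :&: N = 0)%VS ->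
  (* p is an LR-structure on N with N.N in [N,N] *)
  LR_on br N p ->
  (forall x y, x \in N -> y \in N -> p x y \in lcs br N 2) ->
  (forall i j : nat, (0 < i)%N -> (0 < j)%N -> forall x y,
      x \in lcs br N i -> y \in lcs br N j -> p x y \in lcs br N (i + j))
  /\
  (forall star : V -> V -> V,
      (forall a b x y, a \in Ginf -> b \in Ginf -> x \in N -> y \in N ->
         star (a + x) (b + y) = br x b + p x y) ->
      complete_product star).
Proof.
move=> Hch Hbr H2 HG HN Hsum Hcap HLR HNN.
have := HLR; case=> Pc [P1 P2 P3 P4 P5].
split.
  move=> [//|i] [//|j] _ _ x y xi yj.
  have := @C2 _ _ br p N x y i j Hbr HN HLR HNN xi yj.
  by rewrite /lcs addSn addnS.
move=> star Hstar v.
have [c Hc] := @nilp _ _ br Ginf N Hbr HG HN Hcap.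
have : v \in (Ginf + N)%VS by rewrite Hsum memvf.
case/memv_addP => b bG [y yN ->].
exists c.+2 => u.
have br0 : forall z, br 0 z = 0.
  move=> z; case: Hbr => L1 _ _ _.
  by apply: (@lin0 _ _ fullv (fun x => br x z)) => a x1 y1 _ _; rewrite L1.
have p0 : p 0 y = 0.
  by apply: (@lin0 _ _ N (fun x => p x y)) => a x1 y1 x1N y1N; rewrite P1.
have step : forall k, exists2 a, a \in Ginf & exists2 x, x \in lcs0 br N k &
    iter k.+1 (fun w => star w (b + y)) u = a + x.
  elim=> [|k [a aG [x xk E]]].
    have : u \in (Ginf + N)%VS by rewrite Hsum memvf.
    case/memv_addP => a0 a0G [x0 x0N ->] /=.
    exists (br x0 b); first exact: ideal.
    exists (p x0 y); first exact: Pc.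
    exact: Hstar.
  rewrite iterS E.
  have xN : x \in N by move/subvP: (@lcs0_sub _ _ br N k HN); apply.
  exists (br x b); first exact: ideal.
  exists (p x y); first by rewrite -[k.+1]addn0; exact: (@C2 _ _ br p N x y k 0 Hbr HN HLR HNN xk yN).
  exact: Hstar.
have [a aG [x xc E]] := step c.
by rewrite iterS E (Hc x xc) Hstar ?mem0v // br0 p0 addr0.
Qed.
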